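(* Let $S$ be a finite set of at least three points in the plane and $v>1$. Let $C$ be a smallest enclosing cross for $S$ and let the median highways $h_1,h_2$ be the middle lines of the two strips of $C$. Then the travel-time diameter $\delta_{\mathrm{med}}$ of $S$ for the speed-$v$ highway cross $h_1\cup h_2$ satisfies $\delta_{\mathrm{med}}\le(2+1/v)\,\delta_{\mathrm{opt}}$, where $\delta_{\mathrm{opt}}$ is the travel-time diameter of $S$ for an optimal axis-aligned speed-$v$ highway cross. Moreover, for every $v\ge\sqrt3$ there are point sets $S$ for which $\delta_{\mathrm{med}}\ge(2-1/(v+2))\,\delta_{\mathrm{opt}}$.
   Context: The underlying metric is the $L_1$-metric. An axis-aligned highway cross is the union $H$ of a horizontal and a vertical line; one travels with speed $1$ off $H$ ($L_1$-lengths) and with speed $v$ along either line of $H$. The travel time $t_H(p,q)$ is the minimum time of a path from $p$ to $q$, and the travel-time diameter of $S$ is $\max_{p,q\in S}t_H(p,q)$; an optimal axis-aligned highway cross minimizes it. An enclosing cross of $S$ is the union of a horizontal strip and a vertical strip (closed regions between two parallel lines) of equal width containing $S$; a smallest enclosing cross has minimum width. The middle line of a strip is the line halfway between its boundary lines. *)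

(* Defs.v *)
From HB Require Import structures.
From mathcomp Require Import all_boot all_order all_algebra.
From mathcomp Require Import boolp classical_sets reals.
Set Implicit Arguments. Unset Strict Implicit. Unset Printing Implicit Defensive.
Import Order.TTheory GRing.Theory Num.Theory.
Local Open Scope ring_scope.
Local Open Scope classical_set_scope.

Section Highway.
Variable R : realType.
Implicit Types (p q x y : R * R) (a b v w : R).

Definition l1 x y : R := `|x.1 - y.1| + `|x.2 - y.2|.

(* An axis-aligned highway cross is encoded by H = (a, b): the union of the
   vertical line {x = a} and the horizontal line {y = b}. *)
Definition on_H (H : R * R) x y : bool :=
  ((x.1 == H.1) && (y.1 == H.1)) || ((x.2 == H.2) && (y.2 == H.2)).

Definition seg_time (H : R * R) v x y : R :=
  if on_H H x y then l1 x y / v else l1 x y.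

Fixpoint path_time (H : R * R) v q x (s : seq (R * R)) : R :=
  match s with
  | [::] => seg_time H v x q
  | y :: s' => seg_time H v x y + path_time H v q y s'
  end.

Definition travel_time (H : R * R) v p q : R :=
  inf [set t | exists s : seq (R * R), t = path_time H v q p s].

Definition tt_diam (H : R * R) v (S : seq (R * R)) : R :=
  \big[Num.max/0]_(p <- S) \big[Num.max/0]_(q <- S) travel_time H v p q.

Definition delta_opt v (S : seq (R * R)) : R :=
  inf (range (fun H : R * R => tt_diam H v S)).

(* Enclosing cross (ch, cv, w): horizontal strip {ch <= y <= ch + w} and
   vertical strip {cv <= x <= cv + w}, both of width w, covering S. *)
Definition enclosing_cross (S : seq (R * R)) (ch cv w : R) : Prop :=
  0 <= w /\
  forall p, p \in S -> (ch <= p.2 <= ch + w) || (cv <= p.1 <= cv + w).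

Definition smallest_enclosing_cross (S : seq (R * R)) (ch cv w : R) : Prop :=
  enclosing_cross S ch cv w /\
  forall ch' cv' w', enclosing_cross S ch' cv' w' -> w <= w'.

Definition median_cross (ch cv w : R) : R * R := (cv + w / 2, ch + w / 2).

End Highway.

(* Main.v *)
Require Import Defs.
From HB Require Import structures.
From mathcomp Require Import all_boot all_order all_algebra.
From mathcomp Require Import boolp classical_sets reals.
From mathcomp Require Import lra ring.
Import Order.TTheory GRing.Theory Num.Theory.
Local Open Scope ring_scope.

Ltac abs_split := repeat match goal with |- context [ `|?t| ] =>
  let h := fresh "h" in
  first [ have h : 0 <= t by lra | have h : t < 0 by lra ];
  first [ rewrite (ger0_norm h) | rewrite (ltr0_norm h) ]; clear h end.

Section P.
Variable R : realType.
Implicit Types (p q x y : R * R) (a b v w : R).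

Lemma tri (a b c : R) : `|a - c| <= `|a - b| + `|b - c|.
Proof. exact: ler_distD. Qed.

Lemma l1_ge0 x y : 0 <= l1 x y.
Proof. by rewrite /l1 addr_ge0. Qed.

Lemma l1_tri x y z : l1 x z <= l1 x y + l1 y z.
Proof.
rewrite /l1; have := tri x.1 y.1 z.1; have := tri x.2 y.2 z.2; lra.
Qed.

Lemma l1_sym x y : l1 x y = l1 y x.
Proof. by rewrite /l1 distrC [`|x.2 - _|]distrC. Qed.

Lemma seg_le H v x y : 1 < v -> seg_time H v x y <= l1 x y.
Proof.
move=> v1; rewrite /seg_time; case: ifP => // _.
rewrite ler_pdivrMr; last lra.
have := l1_ge0 x y; nra.
Qed.

Lemma seg_ge H v x y : 1 < v -> l1 x y / v <= seg_time H v x y.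
Proof.
move=> v1; rewrite /seg_time; case: ifP => // _.
rewrite ler_pdivrMr; last lra.
have := l1_ge0 x y; nra.
Qed.

Lemma seg_on H v x y : on_H H x y -> seg_time H v x y = l1 x y / v.
Proof. by rewrite /seg_time => ->. Qed.

Lemma path_lb H v q (f : R * R -> R) :
  (forall x y, f x <= seg_time H v x y + f y) -> f q <= 0 ->
  forall s x, f x <= path_time H v q x s.
Proof.
move=> hf hq; elim=> [|y s IH] x /=.
  by have := hf x q; lra.
by have := hf x y; have := IH y; lra.
Qed.

Lemma path_ge0 H v q s x : 1 < v -> 0 <= path_time H v q x s.
Proof.
move=> v1; apply: (@path_lb H v q (fun _ => 0)) => // x' y'.
have := seg_ge H v x' y' v1; have := l1_ge0 x' y'.
have : 0 <= l1 x' y' / v by rewrite divr_ge0 //; [exact: l1_ge0| lra].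
lra.
Qed.

Lemma tt_ub H v p q s : 1 < v -> travel_time H v p q <= path_time H v q p s.
Proof.
move=> v1; rewrite /travel_time.
apply: (ge_inf (E := [set t | exists s, t = path_time H v q p s])).
  exists 0 => t [s' ->]; exact: path_ge0.
by exists s.
Qed.

Lemma tt_lb H v p q (f : R * R -> R) :
  (forall x y, f x <= seg_time H v x y + f y) -> f q <= 0 ->
  f p <= travel_time H v p q.
Proof.
move=> hf hq; rewrite /travel_time; apply: lb_le_inf.
  by exists (path_time H v q p [::]), [::].
move=> t [s ->]; exact: path_lb.
Qed.

Lemma tt_ge_l1 H v p q : 1 < v -> l1 p q / v <= travel_time H v p q.
Proof.
move=> v1; apply: (@tt_lb H v p q (fun x => l1 x q / v)).
  move=> x y; have := seg_ge H v x y v1; have := l1_tri x y q.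
  have vp : 0 < v by lra.
  move=> h1 h2.
  have : l1 x q / v <= (l1 x y + l1 y q) / v by rewrite ler_pM2r // invr_gt0.
  rewrite mulrDl; lra.
by rewrite /l1 !subrr normr0 addr0 mul0r.
Qed.

Definition dd H x : R := Num.min `|x.1 - H.1| `|x.2 - H.2|.

Lemma min_cases (A B : R) : (Num.min A B = A /\ A <= B) \/ (Num.min A B = B /\ B <= A).
Proof.
by case: (leP A B) => h; [left | right; split => //; exact: ltW].
Qed.

Lemma dd_lip H x y : dd H x <= dd H y + l1 x y.
Proof.
rewrite /dd /l1; have := tri x.1 y.1 H.1; have := tri x.2 y.2 H.2.
have := normr_ge0 (x.1 - y.1); have := normr_ge0 (x.2 - y.2).
case: (min_cases `|y.1 - H.1| `|y.2 - H.2|) => -[-> h];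
case: (min_cases `|x.1 - H.1| `|x.2 - H.2|) => -[-> h']; lra.
Qed.

Lemma dd_ge0 H x : 0 <= dd H x.
Proof.
rewrite /dd; case: (min_cases `|x.1 - H.1| `|x.2 - H.2|) => -[-> _]; exact: normr_ge0.
Qed.

Lemma dd_onH H x y : on_H H x y -> dd H x = 0 /\ dd H y = 0.
Proof.
have z : forall a b : R, a = 0 -> 0 <= b -> Num.min a b = 0 /\ Num.min b a = 0.
  move=> a b -> hb; case: (min_cases 0 b) => -[-> ?]; case: (min_cases b 0) => -[-> ?]; split; lra.
rewrite /on_H /dd => /orP[/andP[/eqP e1 /eqP e2]|/andP[/eqP e1 /eqP e2]].
- have E1 : `|x.1 - H.1| = 0 by rewrite e1 subrr normr0.
  have E2 : `|y.1 - H.1| = 0 by rewrite e2 subrr normr0.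
  by have [h1 _] := z _ _ E1 (normr_ge0 (x.2 - H.2)); have [h2 _] := z _ _ E2 (normr_ge0 (y.2 - H.2)); rewrite h1 h2.
- have E1 : `|x.2 - H.2| = 0 by rewrite e1 subrr normr0.
  have E2 : `|y.2 - H.2| = 0 by rewrite e2 subrr normr0.
  by have [_ h1] := z _ _ E1 (normr_ge0 (x.1 - H.1)); have [_ h2] := z _ _ E2 (normr_ge0 (y.1 - H.1)); rewrite h1 h2.
Qed.

Lemma tt_ge_min H v p q : 1 < v ->
  Num.min (l1 p q) (dd H p + dd H q) <= travel_time H v p q.
Proof.
move=> v1; apply: (@tt_lb H v p q (fun x => Num.min (l1 x q) (dd H x + dd H q))); last first.
  rewrite /l1 !subrr normr0 addr0.
  case: (min_cases 0 (dd H q + dd H q)) => -[-> h] //.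
move=> x y.
have hxq := l1_tri x y q; have dx := dd_lip H x y; have dq := dd_lip H q y.
rewrite l1_sym in dq.
have sg := seg_ge H v x y v1.
have l0 : 0 <= l1 x y / v by rewrite divr_ge0 //; [exact: l1_ge0 | lra].
case: (min_cases (l1 x q) (dd H x + dd H q)) => -[-> hx];
case: (min_cases (l1 y q) (dd H y + dd H q)) => -[-> hy].
all: rewrite /seg_time; case: ifP => hon; last lra.
all: have [d1 d2] := dd_onH _ _ _ hon; rewrite ?d1 ?d2 in dx hx hy *; lra.
Qed.

Lemma bigmax0_ge0 (I : Type) (r : seq I) (F : I -> R) : 0 <= \big[Num.max/0]_(i <- r) F i.
Proof. by elim: r => [|x s IH]; rewrite ?big_nil ?big_cons // le_max IH orbT. Qed.

Lemma diam_ge0 H v S : 0 <= tt_diam H v S.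
Proof. exact: bigmax0_ge0. Qed.

Lemma tt_le_diam H v S p q : p \in S -> q \in S ->
  travel_time H v p q <= tt_diam H v S.
Proof.
move=> pS qS; rewrite /tt_diam.
apply: (le_trans _ (le_bigmax_seq 0 p xpredT (fun p => \big[Num.max/0]_(q <- S) travel_time H v p q) pS isT)).
exact: (le_bigmax_seq 0 q xpredT (fun q => travel_time H v p q) qS isT).
Qed.

Lemma strip_exists (S : seq (R * R)) (P : pred (R * R)) (g : R * R -> R) D :
  0 <= D -> (forall p q, p \in S -> q \in S -> P p -> P q -> g p - g q <= D) ->
  exists c, forall p, p \in S -> P p -> c <= g p <= c + D.
Proof.
move=> D0 hD; case: (boolP (has P S)) => [/hasP [p0 p0S Pp0] | /hasPn none].
  exists ((\big[Num.max/g p0]_(p <- S | P p) g p) - D) => p pS Pp.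
  apply/andP; split.
    rewrite lerBlDr big_seq_cond; apply: bigmax_le.
      by have := hD p0 p p0S pS Pp0 Pp; lra.
    by move=> i /andP[iS Pi]; have := hD i p iS pS Pi Pp; lra.
  rewrite subrK; exact: (le_bigmax_seq (g p0) p P g pS Pp).
by exists 0 => p pS Pp; move: (none p pS); rewrite Pp.
Qed.

Lemma w_le_diam S ch cv w H v : 1 < v -> smallest_enclosing_cross S ch cv w ->
  w <= tt_diam H v S.
Proof.
move=> v1 [_ hsm].
set D := tt_diam H v S.
have D0 : 0 <= D := diam_ge0 H v S.
have key : forall p q, p \in S -> q \in S ->
    Num.min (l1 p q) (dd H p + dd H q) <= D.
  move=> p q pS qS; apply: le_trans (@tt_le_diam H v S p q pS qS); exact: tt_ge_min.
pose P := fun x : R * R => `|x.1 - H.1| <= `|x.2 - H.2|.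
have [cv' hv] : exists c, forall p, p \in S -> P p -> c <= p.1 <= c + D.
  apply: strip_exists => // p q pS qS Pp Pq.
  have hk := key p q pS qS; move: Pp Pq; rewrite /P => Pp Pq.
  have := ler_norm (p.1 - q.1); have := tri p.1 H.1 q.1; rewrite (distrC H.1).
  have := normr_ge0 (p.2 - q.2).
  case: (min_cases (l1 p q) (dd H p + dd H q)) => -[e0 h0]; rewrite e0 /dd /l1 in h0 hk;
  case: (min_cases `|p.1 - H.1| `|p.2 - H.2|) => -[e1 ?]; rewrite ?e1 in h0 hk;
  case: (min_cases `|q.1 - H.1| `|q.2 - H.2|) => -[e2 ?]; rewrite ?e2 in h0 hk; lra.
have [ch' hh] : exists c, forall p, p \in S -> ~~ P p -> c <= p.2 <= c + D.
  apply: strip_exists => // p q pS qS; rewrite /P -!ltNge => Pp Pq.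
  have hk := key p q pS qS.
  have := ler_norm (p.2 - q.2); have := tri p.2 H.2 q.2; rewrite (distrC H.2).
  have := normr_ge0 (p.1 - q.1).
  case: (min_cases (l1 p q) (dd H p + dd H q)) => -[e0 h0]; rewrite e0 /dd /l1 in h0 hk;
  case: (min_cases `|p.1 - H.1| `|p.2 - H.2|) => -[e1 ?]; rewrite ?e1 in h0 hk;
  case: (min_cases `|q.1 - H.1| `|q.2 - H.2|) => -[e2 ?]; rewrite ?e2 in h0 hk; lra.
apply: (hsm ch' cv' D); split => // p pS.
case: (boolP (P p)) => Pp; first by rewrite (hv p pS Pp) orbT.
by rewrite (hh p pS Pp).
Qed.

Lemma onV H x y : x.1 = H.1 -> y.1 = H.1 -> on_H H x y.
Proof. by move=> e1 e2; rewrite /on_H e1 e2 !eqxx. Qed.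

Lemma onHz H x y : x.2 = H.2 -> y.2 = H.2 -> on_H H x y.
Proof. by move=> e1 e2; rewrite /on_H e1 e2 !eqxx orbT. Qed.

Lemma route_direct H v x y : 1 < v -> travel_time H v x y <= l1 x y.
Proof. move=> v1; apply: le_trans (tt_ub H v x y [::] v1) _; exact: seg_le. Qed.

Lemma route_V H v x y : 1 < v ->
  travel_time H v x y <= `|x.1 - H.1| + `|x.2 - y.2| / v + `|y.1 - H.1|.
Proof.
move=> v1; apply: le_trans (tt_ub H v x y [:: (H.1, x.2); (H.1, y.2)] v1) _ => /=.
rewrite (@seg_on H v (H.1, x.2) (H.1, y.2)); last exact: onV.
have h1 := seg_le H v x (H.1, x.2) v1; have h2 := seg_le H v (H.1, y.2) y v1.
move: h1 h2; rewrite /l1 /= !subrr !normr0 (distrC H.1 y.1); lra.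
Qed.

Lemma route_H H v x y : 1 < v ->
  travel_time H v x y <= `|x.2 - H.2| + `|x.1 - y.1| / v + `|y.2 - H.2|.
Proof.
move=> v1; apply: le_trans (tt_ub H v x y [:: (x.1, H.2); (y.1, H.2)] v1) _ => /=.
rewrite (@seg_on H v (x.1, H.2) (y.1, H.2)); last exact: onHz.
have h1 := seg_le H v x (x.1, H.2) v1; have h2 := seg_le H v (y.1, H.2) y v1.
move: h1 h2; rewrite /l1 /= !subrr !normr0 (distrC H.2 y.2); lra.
Qed.

Lemma route_VH H v x y : 1 < v ->
  travel_time H v x y <= `|x.1 - H.1| + (`|x.2 - H.2| + `|y.1 - H.1|) / v + `|y.2 - H.2|.
Proof.
move=> v1; apply: le_trans (tt_ub H v x y [:: (H.1, x.2); (H.1, H.2); (y.1, H.2)] v1) _ => /=.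
rewrite (@seg_on H v (H.1, x.2) (H.1, H.2)); last exact: onV.
rewrite (@seg_on H v (H.1, H.2) (y.1, H.2)); last exact: onHz.
have h1 := seg_le H v x (H.1, x.2) v1; have h2 := seg_le H v (y.1, H.2) y v1.
move: h1 h2; rewrite /l1 /= !subrr !normr0 (distrC H.2 y.2) (distrC H.1 y.1) mulrDl; lra.
Qed.

Lemma route_HV H v x y : 1 < v ->
  travel_time H v x y <= `|x.2 - H.2| + (`|x.1 - H.1| + `|y.2 - H.2|) / v + `|y.1 - H.1|.
Proof.
move=> v1; apply: le_trans (tt_ub H v x y [:: (x.1, H.2); (H.1, H.2); (H.1, y.2)] v1) _ => /=.
rewrite (@seg_on H v (x.1, H.2) (H.1, H.2)); last exact: onHz.
rewrite (@seg_on H v (H.1, H.2) (H.1, y.2)); last exact: onV.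
have h1 := seg_le H v x (x.1, H.2) v1; have h2 := seg_le H v (H.1, y.2) y v1.
move: h1 h2; rewrite /l1 /= !subrr !normr0 (distrC H.2 y.2) (distrC H.1 y.1) mulrDl; lra.
Qed.

Lemma divle v a b : 0 < v -> a <= b -> a / v <= b / v.
Proof. by move=> v0 h; rewrite ler_pM2r // invr_gt0. Qed.

Lemma in_strip (c w t : R) : c <= t <= c + w -> `|t - (c + w / 2)| <= w / 2.
Proof. by move=> /andP[h1 h2]; rewrite ler_norml; apply/andP; split; lra. Qed.

Lemma med_ub S ch cv w v p q : 1 < v -> enclosing_cross S ch cv w ->
  p \in S -> q \in S ->
  travel_time (median_cross ch cv w) v p q <= w + (l1 p q + w) / v.
Proof.
move=> v1 [w0 hS] pS qS; have v0 : 0 < v by lra.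
set M := median_cross ch cv w.
have hm : forall x, x \in S -> `|x.2 - M.2| <= w / 2 \/ `|x.1 - M.1| <= w / 2.
  move=> x xS; case/orP: (hS x xS) => h; [left | right]; exact: in_strip.
have t1 := tri p.1 q.1 M.1; have t2 := tri p.2 q.2 M.2.
have t3 := tri q.1 p.1 M.1; have t4 := tri q.2 p.2 M.2.
rewrite (distrC q.1 p.1) (distrC q.2 p.2) in t3 t4.
have n1 := normr_ge0 (p.1 - q.1); have n2 := normr_ge0 (p.2 - q.2).
have lw : 0 <= w / v by rewrite divr_ge0 //; lra.
have l0 : 0 <= l1 p q / v by rewrite divr_ge0 //; [exact: l1_ge0 | lra].
have ed : (l1 p q + w) / v = l1 p q / v + w / v by rewrite mulrDl.
rewrite ed.
case: (hm p pS) => hp; case: (hm q qS) => hq.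
- apply: le_trans (route_H M v p q v1) _.
  have := @divle v `|p.1 - q.1| (l1 p q) v0; rewrite /l1; lra.
- apply: le_trans (route_HV M v p q v1) _.
  have := @divle v (`|p.1 - M.1| + `|q.2 - M.2|) (l1 p q + w) v0.
  rewrite /l1 mulrDl; lra.
- apply: le_trans (route_VH M v p q v1) _.
  have := @divle v (`|p.2 - M.2| + `|q.1 - M.1|) (l1 p q + w) v0.
  rewrite /l1 mulrDl; lra.
- apply: le_trans (route_V M v p q v1) _.
  have := @divle v `|p.2 - q.2| (l1 p q) v0; rewrite /l1; lra.
Qed.

Lemma part1 (S : seq (R * R)) (v ch cv w : R) :
  1 < v -> smallest_enclosing_cross S ch cv w ->
  tt_diam (median_cross ch cv w) v S <= (2 + 1 / v) * delta_opt v S.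
Proof.
move=> v1 hsm; have v0 : 0 < v by lra.
have c0 : 0 < 2 + 1 / v by rewrite ltr_wpDr // ?divr_ge0 //; lra.
rewrite -ler_pdivrMl //; rewrite /delta_opt; apply: lb_le_inf.
  by exists (tt_diam (0, 0) v S), (0, 0).
move=> _ [H _ <-]; rewrite ler_pdivrMl //.
have wD := @w_le_diam S ch cv w H v v1 hsm.
have ce : forall D, (2 + 1 / v) * D = 2 * D + D / v by move=> D; rewrite mulrDl [1 / v * D]mulrC mul1r.
have D0 := diam_ge0 H v S.
rewrite /tt_diam big_seq_cond; apply: bigmax_le; first by rewrite mulr_ge0 // ?(ltW c0).
move=> p /andP[pS _]; rewrite big_seq_cond; apply: bigmax_le; first by rewrite mulr_ge0 // ?(ltW c0).
move=> q /andP[qS _].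
have h1 := @med_ub S ch cv w v p q v1 hsm.1 pS qS.
have h2 := tt_ge_l1 H v p q v1.
have h3 := @tt_le_diam H v S p q pS qS.
have h4 := @divle v w (tt_diam H v S) v0 wD.
rewrite mulrDl in h1; rewrite ce -/(tt_diam H v S); lra.
Qed.

Definition TV H v q (t : R) := Num.min (`|t - q.2| / v + `|q.1 - H.1|)
  ((`|t - H.2| + `|q.1 - H.1|) / v + `|q.2 - H.2|).
Definition TH H v q (t : R) := Num.min (`|t - q.1| / v + `|q.2 - H.2|)
  ((`|t - H.1| + `|q.2 - H.2|) / v + `|q.1 - H.1|).
Definition Fq H v q x := Num.min (l1 x q)
  (Num.min (`|x.1 - H.1| + TV H v q x.2) (`|x.2 - H.2| + TH H v q x.1)).

Lemma divD v a b c : 0 < v -> a <= b + c -> a / v <= b / v + c / v.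
Proof. by move=> v0 h; rewrite -mulrDl; exact: divle. Qed.

Lemma divle1 v a : 1 < v -> 0 <= a -> a / v <= a.
Proof. by move=> v1 a0; rewrite ler_pdivrMr; [nra | lra]. Qed.

Lemma TV_lip H v q (t t' : R) : 1 < v -> TV H v q t <= `|t - t'| / v + TV H v q t'.
Proof.
move=> v1; have v0 : 0 < v by lra.
have k1 := @divD v _ _ _ v0 (tri t t' q.2).
have k2 := @divD v _ _ _ v0 (tri t t' H.2).
rewrite /TV; have e : forall a b, (a + b) / v = a / v + b / v by move=> a b; rewrite mulrDl.
rewrite !e in k2 *.
case: (min_cases (`|t' - q.2| / v + `|q.1 - H.1|) (`|t' - H.2| / v + `|q.1 - H.1| / v + `|q.2 - H.2|)) => -[-> ?];
case: (min_cases (`|t - q.2| / v + `|q.1 - H.1|) (`|t - H.2| / v + `|q.1 - H.1| / v + `|q.2 - H.2|)) => -[-> ?]; lra.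
Qed.

Lemma TH_lip H v q (t t' : R) : 1 < v -> TH H v q t <= `|t - t'| / v + TH H v q t'.
Proof.
move=> v1; have v0 : 0 < v by lra.
have k1 := @divD v _ _ _ v0 (tri t t' q.1).
have k2 := @divD v _ _ _ v0 (tri t t' H.1).
rewrite /TH; have e : forall a b, (a + b) / v = a / v + b / v by move=> a b; rewrite mulrDl.
rewrite !e in k2 *.
case: (min_cases (`|t' - q.1| / v + `|q.2 - H.2|) (`|t' - H.1| / v + `|q.2 - H.2| / v + `|q.1 - H.1|)) => -[-> ?];
case: (min_cases (`|t - q.1| / v + `|q.2 - H.2|) (`|t - H.1| / v + `|q.2 - H.2| / v + `|q.1 - H.1|)) => -[-> ?]; lra.
Qed.

Lemma TV_TH H v q (t : R) : 1 < v -> TV H v q t <= `|t - H.2| / v + TH H v q H.1.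
Proof.
move=> v1; have v0 : 0 < v by lra.
have k1 := @divD v _ _ _ v0 (tri t H.2 q.2); rewrite (distrC H.2 q.2) in k1.
rewrite /TV /TH subrr normr0 add0r (distrC H.1 q.1).
have e : forall a b, (a + b) / v = a / v + b / v by move=> a b; rewrite mulrDl.
rewrite !e.
case: (min_cases (`|q.1 - H.1| / v + `|q.2 - H.2|) (`|q.2 - H.2| / v + `|q.1 - H.1|)) => -[-> ?];
case: (min_cases (`|t - q.2| / v + `|q.1 - H.1|) (`|t - H.2| / v + `|q.1 - H.1| / v + `|q.2 - H.2|)) => -[-> ?]; lra.
Qed.

Lemma TH_TV H v q (t : R) : 1 < v -> TH H v q t <= `|t - H.1| / v + TV H v q H.2.
Proof.
move=> v1; have v0 : 0 < v by lra.
have k1 := @divD v _ _ _ v0 (tri t H.1 q.1); rewrite (distrC H.1 q.1) in k1.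
rewrite /TV /TH subrr normr0 add0r (distrC H.2 q.2).
have e : forall a b, (a + b) / v = a / v + b / v by move=> a b; rewrite mulrDl.
rewrite !e.
case: (min_cases (`|q.2 - H.2| / v + `|q.1 - H.1|) (`|q.1 - H.1| / v + `|q.2 - H.2|)) => -[-> ?];
case: (min_cases (`|t - q.1| / v + `|q.2 - H.2|) (`|t - H.1| / v + `|q.2 - H.2| / v + `|q.1 - H.1|)) => -[-> ?]; lra.
Qed.

Lemma TV_l1 H v q (t : R) : 1 < v -> TV H v q t <= `|t - q.2| + `|q.1 - H.1|.
Proof.
move=> v1; have := @divle1 v _ v1 (normr_ge0 (t - q.2)); rewrite /TV.
case: (min_cases (`|t - q.2| / v + `|q.1 - H.1|) ((`|t - H.2| + `|q.1 - H.1|) / v + `|q.2 - H.2|)) => -[-> ?]; lra.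
Qed.

Lemma TH_l1 H v q (t : R) : 1 < v -> TH H v q t <= `|t - q.1| + `|q.2 - H.2|.
Proof.
move=> v1; have := @divle1 v _ v1 (normr_ge0 (t - q.1)); rewrite /TH.
case: (min_cases (`|t - q.1| / v + `|q.2 - H.2|) ((`|t - H.1| + `|q.2 - H.2|) / v + `|q.1 - H.1|)) => -[-> ?]; lra.
Qed.

Lemma min3_le (a b c : R) : Num.min a (Num.min b c) <= a /\ Num.min a (Num.min b c) <= b /\ Num.min a (Num.min b c) <= c.
Proof.
case: (min_cases b c) => -[-> ?]; [case: (min_cases a b) | case: (min_cases a c)] => -[-> ?]; split; try split; lra.
Qed.

Lemma min3_eq (a b c : R) : Num.min a (Num.min b c) = a \/ Num.min a (Num.min b c) = b \/ Num.min a (Num.min b c) = c.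
Proof.
case: (min_cases b c) => -[-> ?]; [case: (min_cases a b) | case: (min_cases a c)] => -[-> ?]; tauto.
Qed.

Lemma Fq_pot H v q x y : 1 < v -> Fq H v q x <= seg_time H v x y + Fq H v q y.
Proof.
move=> v1; have v0 : 0 < v by lra.
set A := TV H v q x.2; set B := TH H v q x.1; set A' := TV H v q y.2; set B' := TH H v q y.1.
have [fx1 [fx2 fx3]] := min3_le (l1 x q) (`|x.1 - H.1| + A) (`|x.2 - H.2| + B).
rewrite -/(Fq H v q x) in fx1 fx2 fx3.
have hy := min3_eq (l1 y q) (`|y.1 - H.1| + A') (`|y.2 - H.2| + B').
rewrite -/(Fq H v q y) in hy.
have LA := TV_lip H v q x.2 y.2 v1; have LB := TH_lip H v q x.1 y.1 v1.
rewrite -/A -/A' in LA; rewrite -/B -/B' in LB.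
rewrite /seg_time; case: ifP => hon.
  have [[e1 e2]|[e1 e2]] : (x.1 = H.1 /\ y.1 = H.1) \/ (x.2 = H.2 /\ y.2 = H.2).
    by move: hon; rewrite /on_H => /orP[/andP[/eqP -> /eqP ->]|/andP[/eqP -> /eqP ->]]; [left|right].
  - have l1e : l1 x y = `|x.2 - y.2| by rewrite /l1 e1 e2 subrr normr0 add0r.
    have c1 := TV_l1 H v q y.2 v1; have c2 := TV_TH H v q y.2 v1.
    have c3 := @divle1 v _ v1 (normr_ge0 (y.2 - H.2)).
    rewrite -/A' in c1 c2; rewrite -e2 -/B' in c2.
    rewrite l1e; move: fx2; rewrite e1 subrr normr0 add0r => fx2.
    rewrite e2 subrr normr0 add0r in hy.
    case: hy => [->|[->|->]]; rewrite ?/l1 ?e2 ?(distrC H.1 q.1); lra.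
  - have l1e : l1 x y = `|x.1 - y.1| by rewrite /l1 e1 e2 subrr normr0 addr0.
    have c1 := TH_l1 H v q y.1 v1; have c2 := TH_TV H v q y.1 v1.
    have c3 := @divle1 v _ v1 (normr_ge0 (y.1 - H.1)).
    rewrite -/B' in c1 c2; rewrite -e2 -/A' in c2.
    rewrite l1e; move: fx3; rewrite e1 subrr normr0 add0r => fx3.
    rewrite e2 subrr normr0 add0r in hy.
    case: hy => [->|[->|->]]; rewrite ?/l1 ?e2 ?(distrC H.2 q.2); lra.
have hl := l1_tri x y q.
have d1 := @divle1 v _ v1 (normr_ge0 (x.2 - y.2)); have d2 := @divle1 v _ v1 (normr_ge0 (x.1 - y.1)).
have t1 := tri x.1 y.1 H.1; have t2 := tri x.2 y.2 H.2.
case: hy => [->|[->|->]]; rewrite /l1 in hl fx1 *; lra.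
Qed.

Lemma tt_ge_Fq H v p q : 1 < v -> Fq H v q p <= travel_time H v p q.
Proof.
move=> v1; apply: (@tt_lb H v p q (Fq H v q)); first by move=> x y; exact: Fq_pot.
have [h _] := min3_le (l1 q q) (`|q.1 - H.1| + TV H v q q.2) (`|q.2 - H.2| + TH H v q q.1).
by move: h; rewrite -/(Fq H v q q) /l1 !subrr normr0 addr0.
Qed.

Definition cfg (Y eps : R) : seq (R * R) :=
  [:: (1/2, -Y); (Y, -(1/2)); (-(1/2), -1); (1, 1/2); (-eps, eps)].

Lemma forced Y eps ch cv w : 2 < Y -> 0 < eps ->
  enclosing_cross (cfg Y eps) ch cv w -> w <= 1 -> ch = -(1/2) /\ cv = -(1/2) /\ w = 1.
Proof.
move=> hY he [w0 h] w1.
have hp := h (1/2, -Y) ltac:(by rewrite !inE eqxx).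
have hq := h (Y, -(1/2)) ltac:(by rewrite !inE eqxx !orbT).
have hr := h (-(1/2), -1) ltac:(by rewrite !inE eqxx !orbT).
have hs := h (1, 1/2) ltac:(by rewrite !inE eqxx !orbT).
have he' := h (-eps, eps) ltac:(by rewrite !inE eqxx !orbT).
move: hp hq hr hs he' => /= /orP[/andP[? ?]|/andP[? ?]] /orP[/andP[? ?]|/andP[? ?]]
  /orP[/andP[? ?]|/andP[? ?]] /orP[/andP[? ?]|/andP[? ?]] /orP[/andP[? ?]|/andP[? ?]];
  (split; [|split]); lra.
Qed.

Lemma cfg_enc Y eps : 2 < Y -> 0 < eps -> eps <= 1/2 ->
  enclosing_cross (cfg Y eps) (-(1/2)) (-(1/2)) 1.
Proof.
move=> hY he he2; split; first lra.
move=> x; rewrite !inE => /orP[/eqP->|/orP[/eqP->|/orP[/eqP->|/orP[/eqP->|/eqP->]]]] /=.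
- by apply/orP; right; apply/andP; split; lra.
- by apply/orP; left; apply/andP; split; lra.
- by apply/orP; right; apply/andP; split; lra.
- by apply/orP; left; apply/andP; split; lra.
- by apply/orP; right; apply/andP; split; lra.
Qed.

Lemma cfg_smallest Y eps : 2 < Y -> 0 < eps -> eps <= 1/2 ->
  smallest_enclosing_cross (cfg Y eps) (-(1/2)) (-(1/2)) 1.
Proof.
move=> hY he he2; split; first exact: cfg_enc.
move=> ch cv w hc; case: (leP w 1) => hw; last exact: ltW.
by have [_ [_ ->]] := @forced Y eps ch cv w hY he hc hw.
Qed.

Lemma cfg_uniq Y eps : 2 < Y -> 0 < eps -> eps < 1/2 -> uniq (cfg Y eps).
Proof.
move=> hY he he2; apply: (@map_uniq _ _ fst); rewrite /= !inE !negb_or.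
by repeat (apply/andP; split); try (apply/eqP => hh; lra).
Qed.

Lemma cfg_diam v : 1 < v ->
  tt_diam (1/2, -(1/2)) v (cfg ((v + 3) / 2) ((1/4) / v)) <= 1 + 2 / v.
Proof.
move=> v1; have v0 : 0 < v by lra.
set Y := (v + 3) / 2; set eps := (1/4) / v.
have i0 : 0 < 1 / v by rewrite divr_gt0 //; lra.
have i1 : 1 / v < 1 by rewrite ltr_pdivrMr //; lra.
have hYv : Y / v = 1/2 + 3/2 / v by rewrite /Y; field; apply/eqP; lra.
have heps : eps * 4 = 1 / v by rewrite /eps; field; apply/eqP; lra.
have hev : eps / v <= eps by apply: divle1 => //; rewrite /eps divr_ge0 //; lra.
have hev0 : 0 <= eps / v by rewrite /eps !divr_ge0 //; lra.
have hY : 2 < Y by rewrite /Y; lra.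
have he : 0 < eps by rewrite /eps divr_gt0 //; lra.
rewrite /tt_diam /cfg !big_cons !big_nil !ge_max.
Ltac rt lem v1 := apply: le_trans (lem _ _ _ _ v1) _; rewrite /=; abs_split; lra.
Ltac rd v1 := apply: le_trans (route_direct _ _ _ _ v1) _; rewrite /l1 /= !subrr normr0; lra.
repeat (apply/andP; split).
- rd v1.
- rt route_VH v1.
- rt route_VH v1.
- rt route_V v1.
- rt route_V v1.
- lra.
- rt route_HV v1.
- rd v1.
- rt route_H v1.
- rt route_HV v1.
- rt route_H v1.
- lra.
- rt route_HV v1.
- rt route_H v1.
- rd v1.
- rt route_HV v1.
- rt route_H v1.
- lra.
- rt route_V v1.
- rt route_VH v1.
- rt route_VH v1.
- rd v1.
- rt route_V v1.
- lra.
- rt route_V v1.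
- rt route_H v1.
- rt route_H v1.
- rt route_V v1.
- rd v1.
- lra.
- lra.
Qed.
End P.

Section P2.
Variable R : realType.

Lemma le_addmin (z a b c : R) : z <= a + b -> z <= a + c -> z <= a + Num.min b c.
Proof. by move=> h1 h2; case: (@min_cases R b c) => -[-> _]. Qed.

Lemma cfg_med (v : R) : 1 < v -> 3 <= v * v ->
  2 + 3 / v <= travel_time (median_cross (-(1/2)) (-(1/2)) 1) v (1/2, -((v + 3) / 2)) ((v + 3) / 2, -(1/2)).
Proof.
move=> v1 v3; have v0 : 0 < v by lra.
apply: le_trans (@tt_ge_Fq R _ _ _ _ v1).
set Y := (v + 3) / 2.
have i0 : 0 < 1 / v by rewrite divr_gt0 //; lra.
have i1 : 1 / v < 1 by rewrite ltr_pdivrMr //; lra.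
have hYv : Y / v = 1/2 + 3/2 / v by rewrite /Y; field; apply/eqP; lra.
have h3 : 3 / v <= v by rewrite ler_pdivrMr.
have hY : 2 < Y by rewrite /Y; lra.
have hYd : 2 * Y = v + 3 by rewrite /Y; field.
rewrite /Fq /TV /TH /median_cross /= !le_min; apply/andP; split.
  rewrite /l1 /=; abs_split; lra.
apply/andP; split; apply: le_addmin; abs_split; rewrite ?mulrDl; abs_split; lra.
Qed.
End P2.

Arguments cfg {R}.

Theorem lemma3 (R : realType) :
  (forall (S : seq (R * R)) (v ch cv w : R),
      uniq S -> (3 <= size S)%N -> 1 < v ->
      smallest_enclosing_cross S ch cv w ->
      tt_diam (median_cross ch cv w) v S <= (2 + 1 / v) * delta_opt v S)
  /\
  (forall v : R, Num.sqrt 3 <= v ->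
     exists S : seq (R * R),
       [/\ uniq S, (3 <= size S)%N,
           exists ch cv w, smallest_enclosing_cross S ch cv w
         & forall ch cv w, smallest_enclosing_cross S ch cv w ->
             (2 - 1 / (v + 2)) * delta_opt v S
               <= tt_diam (median_cross ch cv w) v S]).
Proof.
split.
  by move=> S v ch cv w _ _ v1 hsm; exact: part1.
move=> v hv.
have s0 := sqrtr_ge0 (3 : R).
have ss : Num.sqrt (3 : R) ^+ 2 = 3 by rewrite sqr_sqrtr.
rewrite expr2 in ss.
have s3 : 3 <= v * v by nra.
have v1 : 1 < v by nra.
have v0 : 0 < v by lra.
set Y := (v + 3) / 2; set eps := (1/4) / v.
have hY : 2 < Y by rewrite /Y; lra.
have i1 : 1 / v < 1 by rewrite ltr_pdivrMr //; lra.
have heps : eps * 4 = 1 / v by rewrite /eps; field; apply/eqP; lra.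
have he : 0 < eps by rewrite /eps divr_gt0 //; lra.
have he2 : eps < 1/2 by lra.
exists (cfg Y eps); split.
- exact: (@cfg_uniq R Y eps hY he he2).
- by [].
- by exists (-(1/2)), (-(1/2)), 1; apply: (@cfg_smallest R) => //; lra.
move=> ch cv w [hc hm].
have w1 : w <= 1 by apply: hm; apply: (@cfg_enc R) => //; lra.
have [-> [-> ->]] := @forced R Y eps ch cv w hY he hc w1.
have d1 : delta_opt v (cfg Y eps) <= 1 + 2 / v.
  apply: le_trans (@cfg_diam R v v1); rewrite /delta_opt.
  apply: (ge_inf (E := range (fun H : R * R => tt_diam H v (cfg Y eps)))).
    by exists 0 => _ [H _ <-]; exact: diam_ge0.
  by exists (1/2, -(1/2)).
have m := @cfg_med R v v1 s3.
have pS : (1/2, -Y) \in cfg Y eps by rewrite !inE eqxx.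
have qS : (Y, -(1/2)) \in cfg Y eps by rewrite !inE eqxx !orbT.
have t := @tt_le_diam R (median_cross (-(1/2)) (-(1/2)) 1) v (cfg Y eps) _ _ pS qS.
have c : 0 <= 2 - 1 / (v + 2).
  have : 1 / (v + 2) <= 1 by rewrite ler_pdivrMr; lra.
  lra.
have e : (2 - 1 / (v + 2)) * (1 + 2 / v) = 2 + 3 / v.
  by field; apply/andP; split; apply/eqP; lra.
apply: le_trans (ler_wpM2l c d1) _; rewrite e; exact: le_trans m t.
Qed.
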